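(* Let $q\ge 4$ be a prime power. Let $\ell$ and $m$ be distinct lines of $PG(2,q)$, let $P=\ell\cap m$, let $Q$ be a point of $\ell$ different from $P$, and let $R,S,T$ be three distinct points of $m$ different from $P$. Then $A=(\ell\setminus\{P,Q\})\cup\{R,S,T\}$ is a minimal $(1,2)$-saturating set of size $q+2$ in $PG(2,q)$.
   Context: $PG(2,q)$ is the projective plane over $\mathbb{F}_q$. For a point set $A$, a secant of $A$ is a line $\ell$ with $|\ell\cap A|\ge2$, counted with multiplicity $\binom{|\ell\cap A|}{2}$. A set $A$ of points of $PG(2,q)$ is $(1,\mu)$-saturating if (M1) $A$ spans $PG(2,q)$, (M2) $A\neq PG(2,q)$, and (M3) every point not in $A$ lies on secants of $A$ whose multiplicities sum to at least $\mu$. A $(1,\mu)$-saturating set of size $n$ is minimal if it does not contain a $(1,\mu)$-saturating set of size $n-1$. *)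

(* Defs.v *)
From HB Require Import structures.
From mathcomp Require Import all_boot all_order all_algebra all_field.
Set Implicit Arguments. Unset Strict Implicit. Unset Printing Implicit Defensive.
Import GRing.Theory.
Local Open Scope ring_scope.

(* Model of PG(2,q): F a finite field with #|F| = q.  A point is a nonzero
   vector of F^3 normalized so that its first nonzero coordinate is 1
   (a canonical representative of the 1-dimensional subspace).  Lines are
   represented dually by normalized vectors too; point p lies on line L
   iff p . L = 0. *)

Definition normv (F : finFieldType) (v : 'rV[F]_3) : bool :=
  [exists i : 'I_3, (v 0 i == 1) && [forall j : 'I_3, (j < i)%N ==> (v 0 j == 0)]].

Definition point (F : finFieldType) := {v : 'rV[F]_3 | normv v}.
HB.instance Definition _ (F : finFieldType) := Finite.on (point F).

Definition line (F : finFieldType) := {v : 'rV[F]_3 | normv v}.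
HB.instance Definition _ (F : finFieldType) := Finite.on (line F).

Definition incident (F : finFieldType) (p : point F) (L : line F) : bool :=
  (val p *m (val L)^T) 0 0 == 0.

Definition pts (F : finFieldType) (L : line F) : {set point F} :=
  [set p | incident p L].

Definition spans (F : finFieldType) (A : {set point F}) : bool :=
  \rank (\sum_(p in A) <<val p>>)%MS == 3%N.

Definition secant_mult (F : finFieldType) (A : {set point F}) (x : point F) : nat :=
  \sum_(L : line F | incident x L && (2 <= #|pts L :&: A|)%N) 'C(#|pts L :&: A|, 2).

Definition saturating (F : finFieldType) (mu : nat) (A : {set point F}) : Prop :=
  [/\ spans A, A != [set: point F] &
      forall x : point F, x \notin A -> (mu <= secant_mult A x)%N].

Definition minimal_saturating (F : finFieldType) (mu n : nat) (A : {set point F}) : Prop :=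
  [/\ saturating mu A, #|A| = n &
      ~ (exists B : {set point F}, [/\ B \subset A, #|B| = n.-1 & saturating mu B])].

(* Main.v *)
Require Import Defs.
From mathcomp Require Import all_boot all_order all_algebra all_field.
From mathcomp Require Import ring zify.
Set Implicit Arguments. Unset Strict Implicit. Unset Printing Implicit Defensive.
Import GRing.Theory.
Local Open Scope ring_scope.

Section Coords.
Variable F : finFieldType.
Implicit Types u v w : 'rV[F]_3.

Definition i1 : 'I_3 := @Ordinal 3 1 isT.
Definition i2 : 'I_3 := @Ordinal 3 2 isT.
Notation x0 v := (v 0 0).
Notation x1 v := (v 0 i1).
Notation x2 v := (v 0 i2).

Lemma ord3 (i : 'I_3) : [\/ i = 0, i = i1 | i = i2].
Proof.
case: i => [[|[|[|k]]] Hk] //.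
- by constructor 1; apply: val_inj.
- by constructor 2; apply: val_inj.
- by constructor 3; apply: val_inj.
Qed.

Lemma row3P u v : x0 u = x0 v -> x1 u = x1 v -> x2 u = x2 v -> u = v.
Proof.
move=> h0 h1 h2; apply/rowP => i.
by case: (ord3 i) => ->.
Qed.

Lemma rowP3 u v : u = v -> [/\ x0 u = x0 v, x1 u = x1 v & x2 u = x2 v].
Proof. by move=> ->. Qed.

Definition dot u v := x0 u * x0 v + x1 u * x1 v + x2 u * x2 v.

Lemma dotE u v : (u *m v^T) 0 0 = dot u v.
Proof.
rewrite mxE !big_ord_recl big_ord0 !mxE addr0 /dot addrA.
by congr (_ * _ + _ * _ + _ * _); congr (_ _ _); apply: val_inj.
Qed.

Definition cross u v : 'rV[F]_3 :=
  \row_(i < 3) [:: x1 u * x2 v - x2 u * x1 v;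
                 x2 u * x0 v - x0 u * x2 v;
                 x0 u * x1 v - x1 u * x0 v]`_i.

Lemma crossE u v : [/\ x0 (cross u v) = x1 u * x2 v - x2 u * x1 v,
  x1 (cross u v) = x2 u * x0 v - x0 u * x2 v &
  x2 (cross u v) = x0 u * x1 v - x1 u * x0 v].
Proof. by rewrite !mxE. Qed.

Lemma scaleE (k : F) u : [/\ x0 (k *: u) = k * x0 u, x1 (k *: u) = k * x1 u &
   x2 (k *: u) = k * x2 u].
Proof. by rewrite !mxE. Qed.

Lemma zeroE : [/\ x0 (0 : 'rV[F]_3) = 0, x1 (0 : 'rV[F]_3) = 0 & x2 (0 : 'rV[F]_3) = 0].
Proof. by rewrite !mxE. Qed.

Lemma normvE v : normv v <->
  [\/ x0 v = 1, x0 v = 0 /\ x1 v = 1 | [/\ x0 v = 0, x1 v = 0 & x2 v = 1]].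
Proof.
split.
- case/existsP => i /andP [/eqP h /forallP hj].
  case: (ord3 i) => ?; subst i.
  + by constructor 1.
  + by constructor 2; split => //; apply/eqP; exact: (hj 0).
  + constructor 3; split => //; apply/eqP; [exact: (hj 0)| exact: (hj i1)].
- case=> [h|[h0 h1]|[h0 h1 h2]]; apply/existsP.
  + by exists 0; rewrite h eqxx; apply/forallP => j.
  + exists i1; rewrite h1 eqxx /=; apply/forallP => j; apply/implyP => hj.
    by case: (ord3 j) hj => -> // _; rewrite h0.
  + exists i2; rewrite h2 eqxx /=; apply/forallP => j; apply/implyP => hj.
    by case: (ord3 j) hj => -> // _; rewrite ?h0 ?h1.
Qed.


Lemma crossP u v : normv u -> normv v -> cross u v = 0 -> u = v.
Proof.
move=> /normvE hu /normvE hv /rowP3; case: (crossE u v) => -> -> ->.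
case: zeroE => -> -> -> [e0 e1 e2].
move: e0 e1 e2.
case: hu => [a0|[a0 a1]|[a0 a1 a2]]; case: hv => [b0|[b0 b1]|[b0 b1 b2]];
rewrite ?a0 ?a1 ?a2 ?b0 ?b1 ?b2 ?mulr1 ?mul1r ?mulr0 ?mul0r ?subr0 ?sub0r ?oppr_eq0;
move=> e0 e1 e2.
all: try (by move: e0 => /eqP; rewrite ?oppr_eq0 ?oner_eq0).
all: try (by move: e1 => /eqP; rewrite ?oppr_eq0 ?oner_eq0).
all: try (by move: e2 => /eqP; rewrite ?oppr_eq0 ?oner_eq0).
all: apply: row3P; rewrite ?a0 ?a1 ?a2 ?b0 ?b1 ?b2 //.
all: try (by apply/eqP; rewrite -subr_eq0; apply/eqP).
all: try (by apply/eqP; rewrite eq_sym -subr_eq0; apply/eqP).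
Qed.


Lemma normv_neq0 v : normv v -> v != 0.
Proof.
move=> /normvE h; apply/eqP => e; move: h; rewrite e; case: zeroE => -> -> ->.
by case=> [|[_]|[_ _]] /eqP; rewrite eq_sym oner_eq0.
Qed.

Lemma normalize v : v != 0 -> exists2 k : F, k != 0 & normv (k *: v).
Proof.
move=> vn0.
have [h0|h0] := eqVneq (x0 v) 0; last first.
  exists (x0 v)^-1; first by rewrite invr_eq0.
  by apply/normvE; constructor 1; rewrite mxE mulVf.
have [h1|h1] := eqVneq (x1 v) 0; last first.
  exists (x1 v)^-1; first by rewrite invr_eq0.
  by apply/normvE; constructor 2; rewrite !mxE h0 mulr0 mulVf.
have [h2|h2] := eqVneq (x2 v) 0; last first.
  exists (x2 v)^-1; first by rewrite invr_eq0.
  by apply/normvE; constructor 3; rewrite !mxE h0 h1 mulr0 mulVf.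
by case/eqP: vn0; case: zeroE => z0 z1 z2; apply: row3P; rewrite ?h0 ?h1 ?h2.
Qed.

Lemma cross_scaler (k : F) u v : cross u (k *: v) = k *: cross u v.
Proof. by apply: row3P; rewrite !mxE /=; ring. Qed.

Lemma cross_scalel (k : F) u v : cross (k *: u) v = k *: cross u v.
Proof. by apply: row3P; rewrite !mxE /=; ring. Qed.

Lemma cross_self u : cross u u = 0.
Proof. by apply: row3P; rewrite !mxE /=; ring. Qed.

Lemma dotC u v : dot u v = dot v u.
Proof. by rewrite /dot; ring. Qed.

Lemma dot_scaler (k : F) u v : dot u (k *: v) = k * dot u v.
Proof. by rewrite /dot !mxE /=; ring. Qed.

Lemma dot_crossl u v : dot u (cross u v) = 0.
Proof. by rewrite /dot !mxE /=; ring. Qed.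

Lemma dot_crossr u v : dot v (cross u v) = 0.
Proof. by rewrite /dot !mxE /=; ring. Qed.

Lemma cross_triple a b c : cross c (cross a b) = dot c b *: a - dot c a *: b.
Proof. by apply: row3P; rewrite /dot !mxE /=; ring. Qed.

Lemma uniq2 a b c d : normv a -> normv b -> normv c -> normv d -> a != b ->
  dot a c = 0 -> dot b c = 0 -> dot a d = 0 -> dot b d = 0 -> c = d.
Proof.
move=> na nb nc nd ab ac bc ad bd.
have w0 : cross a b != 0 by apply: contra ab => /eqP h; apply/eqP; exact: crossP na nb h.
have [k k0 nw] := normalize w0.
have e x : normv x -> dot a x = 0 -> dot b x = 0 -> x = k *: cross a b.
  move=> nx ax bx; apply: crossP => //.
  by rewrite cross_scaler cross_triple dotC bx dotC ax !scale0r subr0 scaler0.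
by rewrite (e c) // (e d).
Qed.

Lemma exists_orth a b : normv a -> normv b -> a != b ->
  exists c, [/\ normv c, dot a c = 0 & dot b c = 0].
Proof.
move=> na nb ab.
have w0 : cross a b != 0 by apply: contra ab => /eqP h; apply/eqP; exact: crossP na nb h.
have [k k0 nw] := normalize w0.
by exists (k *: cross a b); rewrite !dot_scaler dot_crossl dot_crossr !mulr0.
Qed.

End Coords.

Section Geom.
Variable F : finFieldType.
Local Notation pt := (point F).
Implicit Types p q x y : point F.
Implicit Types L M : line F.

Lemma incE p L : incident p L = (dot (val p) (val L) == 0).
Proof. by rewrite /incident dotE. Qed.

Lemma ptsE p L : (p \in pts L) = incident p L.
Proof. by rewrite inE. Qed.

Lemma line_uniq p q L M : p != q -> incident p L -> incident q L ->
  incident p M -> incident q M -> L = M.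
Proof.
rewrite !incE => pq /eqP pL /eqP qL /eqP pM /eqP qM; apply: val_inj.
by apply: (uniq2 (valP p) (valP q) (valP L) (valP M)).
Qed.

Lemma meet_uniq p q L M : L != M -> incident p L -> incident p M ->
  incident q L -> incident q M -> p = q.
Proof.
rewrite !incE => LM /eqP pL /eqP pM /eqP qL /eqP qM; apply: val_inj.
apply: (uniq2 (valP L) (valP M) (valP p) (valP q)) => //; by rewrite dotC.
Qed.

Lemma line_ex p q : p != q -> exists L : line F, incident p L && incident q L.
Proof.
move=> pq; have [c [nc pc qc]] := exists_orth (valP p) (valP q) pq.
by exists (exist _ c nc : line F); rewrite !incE /= pc qc eqxx.
Qed.

Lemma meet_ex L M : L != M -> exists p : point F, incident p L && incident p M.
Proof.
move=> LM; have [c [nc pc qc]] := exists_orth (valP L) (valP M) LM.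
by exists (exist _ c nc : point F); rewrite !incE /= dotC pc dotC qc eqxx.
Qed.

End Geom.

Section Count.
Variable F : finFieldType.

Definition mk3 (x y z : F) : 'rV[F]_3 := \row_(i < 3) [:: x; y; z]`_i.

Lemma mk3E x y z : [/\ (mk3 x y z) 0 0 = x, (mk3 x y z) 0 i1 = y & (mk3 x y z) 0 i2 = z].
Proof. by rewrite !mxE. Qed.

Lemma card_ker_of (w : 'rV[F]_3) (phi : F * F -> 'rV[F]_3) :
  injective phi -> (forall yz, dot (phi yz) w = 0) ->
  (forall v, dot v w = 0 -> exists yz, v = phi yz) ->
  #|[set v : 'rV[F]_3 | dot v w == 0]| = (#|F| * #|F|)%N.
Proof.
move=> inj h1 h2.
have -> : [set v : 'rV[F]_3 | dot v w == 0] = phi @: setT.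
  apply/setP => v; rewrite inE; apply/eqP/imsetP.
  - by move=> /h2 [yz ->]; exists yz.
  - by case=> yz _ ->.
by rewrite card_imset // cardsT card_prod.
Qed.

Lemma card_ker (w : 'rV[F]_3) : normv w ->
  #|[set v : 'rV[F]_3 | dot v w == 0]| = (#|F| * #|F|)%N.
Proof.
move=> /normvE [a0|[a0 a1]|[a0 a1 a2]].
- apply: (@card_ker_of w (fun yz : F * F => mk3 (-(yz.1 * w 0 i1 + yz.2 * w 0 i2)) yz.1 yz.2)).
  + by move=> [y z] [y' z'] /rowP3; rewrite !mxE /= => -[_ -> ->].
  + by move=> [y z]; rewrite /dot /= !mxE /= a0; ring.
  + move=> v hv; exists (v 0 i1, v 0 i2); apply: row3P; rewrite !mxE //=.
    by apply/eqP; rewrite -subr_eq0 opprK -hv /dot a0; apply/eqP; ring.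
- apply: (@card_ker_of w (fun yz : F * F => mk3 yz.1 (-(yz.2 * w 0 i2)) yz.2)).
  + by move=> [y z] [y' z'] /rowP3; rewrite !mxE /= => -[-> _ ->].
  + by move=> [y z]; rewrite /dot /= !mxE /= a0 a1; ring.
  + move=> v hv; exists (v 0 0, v 0 i2); apply: row3P; rewrite !mxE //=.
    by apply/eqP; rewrite -subr_eq0 opprK -hv /dot a0 a1; apply/eqP; ring.
- apply: (@card_ker_of w (fun yz : F * F => mk3 yz.1 yz.2 0)).
  + by move=> [y z] [y' z'] /rowP3; rewrite !mxE /= => -[-> -> _].
  + by move=> [y z]; rewrite /dot /= !mxE /= a0 a1 a2; ring.
  + move=> v hv; exists (v 0 0, v 0 i1); apply: row3P; rewrite !mxE //=.
    by move: hv; rewrite /dot a0 a1 a2 !mulr0 !add0r mulr1.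
Qed.

Lemma card_F2 : (1 < #|F|)%N.
Proof. by apply/card_gt1P; exists 0, 1; rewrite !inE eq_sym oner_eq0. Qed.

Lemma card_pts (L : line F) : #|pts L| = (#|F| + 1)%N.
Proof.
set K := [set v : 'rV[F]_3 | dot v (val L) == 0].
have hK := card_ker (valP L).
have hK1 : #|K :\ 0| = (#|F| * #|F| - 1)%N.
  by rewrite -hK (cardsD1 0 K) inE /dot !mxE !mul0r !addr0 eqxx /= add1n subn1.
set f := fun pk : point F * F => pk.2 *: val pk.1.
have himg : f @: setX (pts L) [set k : F | k != 0] = K :\ 0.
  apply/setP => v; rewrite !inE; apply/imsetP/andP.
  - case=> [[p k]]; rewrite !inE /= => /andP [pL k0] ->; split.
      by rewrite scaler_eq0 negb_or k0 normv_neq0 // (valP p).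
    by move: pL; rewrite /f /= incE => /eqP pL; rewrite dotC dot_scaler dotC pL mulr0.
  - case=> v0 /eqP hv; have [k k0 nk] := normalize v0.
    exists (exist _ (k *: v) nk, k^-1); last by rewrite /f /= scalerA mulVf // scale1r.
    by rewrite !inE /= incE /= dotC dot_scaler dotC hv mulr0 eqxx invr_eq0.
have hinj : {in setX (pts L) [set k : F | k != 0] &, injective f}.
  move=> [p k] [p' k']; rewrite !inE /= /f => /andP [_ k0] /andP [_ k0'] e.
  have pp : p = p'.
    apply: val_inj; apply: crossP; [exact: valP| exact: valP|].
    apply/eqP; have : k *: cross (val p) (val p') == 0.
      by rewrite -cross_scalel e cross_scalel cross_self scaler0.
    by rewrite scaler_eq0 (negbTE k0).
  subst p'; congr (_, _); apply/eqP; rewrite -subr_eq0.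
  have : (k - k') *: val p == 0 by rewrite scalerBl e subrr.
  by rewrite scaler_eq0 (negbTE (normv_neq0 (valP p))) orbF.
have := card_in_imset hinj; rewrite himg hK1 cardsX.
have -> : #|[set k : F | k != 0]| = (#|F| - 1)%N.
  by rewrite subn1 -(cardC1 (0 : F)); apply: eq_card => x; rewrite !inE.
have := card_F2; set n := #|pts L|; set q := #|F| => q2 e.
have e' : (n * (q - 1) = (q + 1) * (q - 1))%N.
  rewrite -e; nia.
have hq : (0 < q - 1)%N by lia.
by apply/eqP; rewrite -(eqn_pmul2r hq) e'.
Qed.

End Count.

Section Span.
Variable F : finFieldType.

Lemma spans_of (A : {set point F}) (l : line F) (Y1 Y2 R : point F) :
  Y1 \in A -> Y2 \in A -> R \in A -> Y1 != Y2 ->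
  incident Y1 l -> incident Y2 l -> ~~ incident R l -> spans A.
Proof.
move=> hY1 hY2 hR Y12 Y1l Y2l Rl.
rewrite /spans; set S := (\sum_(p in A) <<val p>>)%MS.
have hle := rank_leq_row S.
case: (ltngtP (\rank S) 3) => // [hlt|]; last by rewrite ltnNge hle.
have : kermx S^T != 0 by rewrite kermx_eq0 /row_free mxrank_tr neq_ltn hlt.
move=> /eqP hK.
have [i hi] : exists i, row i (kermx S^T) != 0.
  apply/existsP; apply: contra_notT hK => /existsPn h; apply/row_matrixP => i.
  by rewrite row0; apply/eqP; move: (h i); rewrite negbK.
set c := row i (kermx S^T) in hi.
have hcS : c *m S^T = 0 by rewrite /c -row_mul mulmx_ker row0.
have orth p : p \in A -> dot (val p) c = 0.
  move=> pA; rewrite -dotE.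
  have : (val p <= S)%MS by apply: (sumsmx_sup p) => //; rewrite genmxE submx_refl.
  case/submxP => D ->.
  by rewrite -mulmxA -[S]trmxK -trmx_mul hcS trmx0 mulmx0 mxE.
have [k k0 nk] := normalize hi.
have e : k *: c = val l.
  apply: (uniq2 (valP Y1) (valP Y2) nk (valP l)) => //.
  - by rewrite dot_scaler orth // mulr0.
  - by rewrite dot_scaler orth // mulr0.
  - by move: Y1l; rewrite incE => /eqP.
  - by move: Y2l; rewrite incE => /eqP.
by move: Rl; rewrite incE -e dot_scaler orth // mulr0 eqxx.
Qed.

End Span.

Section Secant.
Variable F : finFieldType.
Implicit Types (A B : {set point F}) (x : point F).

Lemma secant_multE A x :
  secant_mult A x = (\sum_(L : line F | incident x L) 'C(#|pts L :&: A|, 2))%N.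
Proof.
rewrite /secant_mult big_mkcondr; apply: eq_bigr => L _.
by case: leqP => // h; rewrite bin_small.
Qed.

Lemma sec_ge2 A x (L1 L2 : line F) : L1 != L2 -> incident x L1 -> incident x L2 ->
  (2 <= #|pts L1 :&: A|)%N -> (2 <= #|pts L2 :&: A|)%N -> (2 <= secant_mult A x)%N.
Proof.
move=> L12 h1 h2 c1 c2; rewrite secant_multE (bigD1 L1) //= (bigD1 L2) /=; last first.
  by rewrite h2 eq_sym.
rewrite -[2%N]/(1 + 1)%N; apply: leq_add; first by rewrite bin_gt0.
by apply: leq_trans (leq_addr _ _); rewrite bin_gt0.
Qed.

Lemma sec_ge1 A x (L : line F) : incident x L ->
  (3 <= #|pts L :&: A|)%N -> (2 <= secant_mult A x)%N.
Proof.
move=> h c; rewrite secant_multE (bigD1 L) //=.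
by apply: leq_trans (leq_addr _ _); apply: leq_trans (leq_bin2l 2 c).
Qed.

Lemma sec_le1 B x (L0 : line F) : incident x L0 ->
  (forall L : line F, incident x L -> (2 <= #|pts L :&: B|)%N -> L = L0) ->
  (#|pts L0 :&: B| <= 2)%N -> (secant_mult B x <= 1)%N.
Proof.
move=> h0 hL c0; rewrite secant_multE (bigD1 L0) //= big1 ?addn0.
  by have := leq_bin2l 2 c0.
move=> L /andP [hx hne]; apply: bin_small; rewrite ltnNge; apply/negP => c.
by move/eqP: hne; apply; apply: hL.
Qed.

Lemma card2_of (X : {set point F}) a b : a != b -> a \in X -> b \in X -> (2 <= #|X|)%N.
Proof. by move=> ab aX bX; apply/card_gt1P; exists a, b. Qed.

Lemma cardI_le1 (L M : line F) : L != M -> (#|pts L :&: pts M| <= 1)%N.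
Proof.
move=> LM; rewrite leqNgt; apply/negP => /card_gt1P [a [b [ha hb ab]]].
move: ha hb; rewrite !inE => /andP [aL aM] /andP [bL bM].
by move/eqP: ab; apply; apply: (meet_uniq LM).
Qed.

Lemma witness B (l m L0 : line F) x : l != m -> ~~ incident x l -> ~~ incident x m ->
  B \subset pts l :|: pts m -> incident x L0 ->
  (forall (L : line F) b b', incident x L -> b \in B -> b' \in B ->
      incident b L -> incident b' L -> incident b m -> incident b' l -> L = L0) ->
  (secant_mult B x <= 1)%N.
Proof.
move=> lm xl xm sB xL0 H.
have nl L : incident x L -> L != l by move=> xL; apply: contraNneq xl => <-.
have nm L : incident x L -> L != m by move=> xL; apply: contraNneq xm => <-.
apply: (sec_le1 xL0).
  move=> L xL /card_gt1P [b1 [b2 []]]; rewrite !inE => /andP [b1L b1B] /andP [b2L b2B] b12.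
  have := subsetP sB _ b1B; have := subsetP sB _ b2B; rewrite !inE.
  case/orP => b2x; case/orP => b1x.
  - by case/eqP: (nl L xL); apply: (line_uniq b12).
  - exact: (H L b1 b2).
  - exact: (H L b2 b1).
  - by case/eqP: (nm L xL); apply: (line_uniq b12).
have -> : pts L0 :&: B = pts L0 :&: B :&: (pts l :|: pts m).
  by apply/esym/setIidPl; apply: subset_trans sB; apply: subsetIr.
rewrite setIUr; apply: leq_trans (leq_card_setU _ _) _.
have e1 : (#|pts L0 :&: B :&: pts l| <= 1)%N.
  by apply: leq_trans (cardI_le1 (nl _ xL0)); apply: subset_leq_card; apply: setSI; apply: subsetIl.
have e2 : (#|pts L0 :&: B :&: pts m| <= 1)%N.
  by apply: leq_trans (cardI_le1 (nm _ xL0)); apply: subset_leq_card; apply: setSI; apply: subsetIl.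
by rewrite -[2%N]/(1 + 1)%N; apply: leq_add.
Qed.

End Secant.


Section Kill.
Variable F : finFieldType.
Implicit Types (B : {set point F}).

Lemma notin_B B (l m : line F) x : B \subset pts l :|: pts m ->
  ~~ incident x l -> ~~ incident x m -> x \notin B.
Proof.
move=> sB xl xm; apply/negP => /(subsetP sB); rewrite !inE.
by rewrite (negbTE xl) (negbTE xm).
Qed.

Lemma kill_m B (l m : line F) (P Q U V : point F) : (3 <= #|F|)%N ->
  l != m -> incident P l -> incident P m -> incident Q l -> Q != P ->
  incident U m -> incident V m -> U != P -> V != P -> U != V ->
  B \subset pts l :|: pts m -> Q \notin B ->
  (forall b, b \in B -> incident b m -> b = U \/ b = V) ->
  exists2 x, x \notin B & (secant_mult B x <= 1)%N.
Proof.
move=> q3 lm Pl Pm Ql QP Um Vm UP VP UV sB QB Hb.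
have Ul : ~~ incident U l by apply/negP => Ul; case/eqP: UP; apply: (meet_uniq lm).
have Vl : ~~ incident V l by apply/negP => Vl; case/eqP: VP; apply: (meet_uniq lm).
have Qm : ~~ incident Q m by apply/negP => Qm; case/eqP: QP; apply: (meet_uniq lm).
have UQ : U != Q by apply: contraNneq Ul => ->.
have [LU /andP [ULU QLU]] := line_ex UQ.
have [x xLU [xU xQ]] : exists2 x, incident x LU & x != U /\ x != Q.
  have sub : [set U; Q] \subset pts LU.
    by apply/subsetP => y; rewrite !inE => /orP [] /eqP ->.
  have c2 : #|[set U; Q]| = 2%N by rewrite cards2 UQ.
  have : #|pts LU :\: [set U; Q]| = (#|F| + 1 - 2)%N.
    by rewrite cardsD (setIidPr sub) card_pts c2.
  move=> e; have : (0 < #|pts LU :\: [set U; Q]|)%N.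
    by rewrite e subn_gt0 addn1 ltnS (leq_trans _ q3).
  case/card_gt0P => x; rewrite !inE negb_or => /andP [/andP [xU xQ] xLU].
  by exists x.
have xl : ~~ incident x l.
  by apply/negP => xl; move: Ul; rewrite -(line_uniq xQ xLU QLU xl Ql) ULU.
have xm : ~~ incident x m.
  by apply/negP => xm; move: Qm; rewrite -(line_uniq xU xLU ULU xm Um) QLU.
have xV : x != V by apply/eqP => e; rewrite e Vm in xm.
have [L0 /andP [xL0 VL0]] := line_ex xV.
exists x; first exact: notin_B sB xl xm.
apply: (witness lm xl xm sB xL0) => L b b' xL bB b'B bL b'L bm b'l.
case: (Hb b bB bm) => eb; subst b.
- have eL : L = LU by apply: (line_uniq xU).
  subst L.
  have LUl : LU != l by apply: contraNneq Ul => <-.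
  have : b' = Q by apply: (meet_uniq LUl).
  by move=> e; move: QB; rewrite -e b'B.
- by apply: (line_uniq xV).
Qed.

Lemma kill_l B (l m : line F) (P Q R S T Y : point F) :
  l != m -> incident P l -> incident P m -> incident Q l -> Q != P ->
  incident R m -> incident S m -> incident T m -> R != P -> S != P -> T != P ->
  R != S -> incident Y l -> Y != P -> Y != Q ->
  B \subset pts l :|: pts m -> Q \notin B -> Y \notin B ->
  (forall b, b \in B -> incident b m -> [\/ b = R, b = S | b = T]) ->
  exists2 x, x \notin B & (secant_mult B x <= 1)%N.
Proof.
move=> lm Pl Pm Ql QP Rm Sm Tm RP SP TP RS Yl YP YQ sB QB YB Hb.
have Rl : ~~ incident R l by apply/negP => Rl; case/eqP: RP; apply: (meet_uniq lm).
have Sl : ~~ incident S l by apply/negP => Sl; case/eqP: SP; apply: (meet_uniq lm).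
have Ym : ~~ incident Y m by apply/negP => Ym; case/eqP: YP; apply: (meet_uniq lm).
have Qm : ~~ incident Q m by apply/negP => Qm; case/eqP: QP; apply: (meet_uniq lm).
have YR : Y != R by apply: contraNneq Rl => <-.
have QS : Q != S by apply: contraNneq Sl => <-.
have [L1 /andP [YL1 RL1]] := line_ex YR.
have [L2 /andP [QL2 SL2]] := line_ex QS.
have L1l : L1 != l by apply: contraNneq Rl => <-.
have L2l : L2 != l by apply: contraNneq Sl => <-.
have L1m : L1 != m by apply: contraNneq Ym => <-.
have L2m : L2 != m by apply: contraNneq Qm => <-.
have L12 : L1 != L2.
  by apply/eqP => e; subst L2; case/eqP: L1l; apply: (line_uniq YQ).
have [x /andP [xL1 xL2]] := meet_ex L12.
have xl : ~~ incident x l.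
  apply/negP => xl; case/eqP: YQ.
  by rewrite -(meet_uniq L1l xL1 xl YL1 Yl) (meet_uniq L2l xL2 xl QL2 Ql).
have xm : ~~ incident x m.
  apply/negP => xm; case/eqP: RS.
  by rewrite -(meet_uniq L1m xL1 xm RL1 Rm) (meet_uniq L2m xL2 xm SL2 Sm).
have xT : x != T by apply: contraNneq xm => ->.
have xR : x != R by apply: contraNneq xm => ->.
have xS : x != S by apply: contraNneq xm => ->.
have [L0 /andP [xL0 TL0]] := line_ex xT.
exists x; first exact: notin_B sB xl xm.
apply: (witness lm xl xm sB xL0) => L b b' xL bB b'B bL b'L bm b'l.
case: (Hb b bB bm) => eb; subst b.
- have eL : L = L1 by apply: (line_uniq xR).
  subst L.
  have : b' = Y by apply: (meet_uniq L1l).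
  by move=> e; move: YB; rewrite -e b'B.
- have eL : L = L2 by apply: (line_uniq xS).
  subst L.
  have : b' = Q by apply: (meet_uniq L2l).
  by move=> e; move: QB; rewrite -e b'B.
- by apply: (line_uniq xT).
Qed.

End Kill.

Local Close Scope ring_scope.

Lemma ar1 n : (4 <= n -> 3 <= n + 1 - 2)%N. Proof. lia. Qed.
Lemma ar2 n : (4 <= n -> n + 1 - 2 + 3 = n + 2)%N. Proof. lia. Qed.

Theorem theorem6p6 (F : finFieldType) (l m : line F) (P Q R S T : point F) :
  (4 <= #|F|)%N ->
  l != m ->
  P \in pts l -> P \in pts m ->
  Q \in pts l -> Q != P ->
  R \in pts m -> S \in pts m -> T \in pts m ->
  R != P -> S != P -> T != P ->
  R != S -> R != T -> S != T ->
  minimal_saturating 2 (#|F| + 2)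
    ((pts l :\: [set P; Q]) :|: [set R; S; T]).
Proof.
move=> q4 lm Pl Pm Ql QP Rm Sm Tm RP SP TP RS RT ST.
rewrite !ptsE in Pl Pm Ql Rm Sm Tm.
set A := (pts l :\: [set P; Q]) :|: [set R; S; T].
have offl y : incident y m -> y != P -> ~~ incident y l.
  by move=> ym yP; apply/negP => yl; case/eqP: yP; apply: (meet_uniq lm).
have Rl := offl R Rm RP; have Sl := offl S Sm SP; have Tl := offl T Tm TP.
have Qm : ~~ incident Q m.
  by apply/negP => Qm; case/eqP: QP; apply: (meet_uniq lm).
have memA y : (y \in A) =
   [&& y != P, y != Q & incident y l] || [|| y == R, y == S | y == T].
  by rewrite !inE negb_or -andbA -orbA.
have QA : Q \notin A.
  rewrite memA eqxx andbF /=; apply/negP => /or3P [] /eqP e.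
  - by move: Rl; rewrite -e Ql.
  - by move: Sl; rewrite -e Ql.
  - by move: Tl; rewrite -e Ql.
have PA : P \notin A.
  by rewrite memA eqxx /= !(eq_sym P) (negbTE RP) (negbTE SP) (negbTE TP).
have sA : A \subset pts l :|: pts m.
  apply/subsetP => y; rewrite memA !inE => /orP [/and3P [_ _ ->] //|].
  by case/or3P => /eqP ->; rewrite ?Rm ?Sm ?Tm orbT.
have Am b : b \in A -> incident b m -> [\/ b = R, b = S | b = T].
  rewrite memA => /orP [/and3P [bP _ bl] bm|].
    by case/eqP: bP; apply: (meet_uniq lm).
  by case/or3P => /eqP ->; [constructor 1|constructor 2|constructor 3].
have cPQ : #|pts l :\: [set P; Q]| = (#|F| + 1 - 2)%N.
  have sub : [set P; Q] \subset pts l.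
    by apply/subsetP => y; rewrite !inE => /orP [] /eqP ->; rewrite ?Pl ?Ql.
  by rewrite cardsD (setIidPr sub) card_pts cards2 eq_sym QP.
have cPQ3 : (3 <= #|pts l :\: [set P; Q]|)%N.
  by rewrite cPQ ar1.
have cRST : #|[set R; S; T]| = 3%N.
  rewrite -setUA cardsU1 cards2 ST !inE negb_or RS RT //.
have cA : #|A| = (#|F| + 2)%N.
  rewrite cardsU cPQ cRST.
  have -> : (pts l :\: [set P; Q]) :&: [set R; S; T] = set0.
    apply/setP => y; rewrite !inE; apply/negP => /andP [/andP [_ yl] h].
    by move: h => /orP [/orP [] |] /eqP e; move: yl; rewrite e ?(negbTE Rl) ?(negbTE Sl) ?(negbTE Tl).
  by rewrite cards0 subn0 ar2.
have sat : saturating 2 A.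
  split.
  - have [Y1 [Y2 [h1 h2 Y12]]] : exists Y1 Y2,
        [/\ Y1 \in pts l :\: [set P; Q], Y2 \in pts l :\: [set P; Q] & Y1 != Y2].
      by apply/card_gt1P; apply: leq_trans cPQ3.
    apply: (spans_of (l := l) (Y1 := Y1) (Y2 := Y2) (R := R)) => //.
    + by rewrite inE h1.
    + by rewrite inE h2.
    + by rewrite memA eqxx orbT.
    + by move: h1; rewrite !inE => /andP [].
    + by move: h2; rewrite !inE => /andP [].
  - by apply/eqP => e; move: PA; rewrite e inE.
  - move=> x xA.
    have [xm|xm] := boolP (incident x m).
      apply: (sec_ge1 (L := m)) => //.
      rewrite -cRST; apply: subset_leq_card; apply/subsetP => y yin.
      rewrite inE ptsE; apply/andP; split; last by rewrite /A in_setU yin orbT.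
      by move: yin; rewrite !inE => /orP [/orP []|] /eqP ->.
    have [xl|xl] := boolP (incident x l).
      apply: (sec_ge1 (L := l)) => //.
      apply: leq_trans cPQ3 _; apply: subset_leq_card; apply/subsetP => y yin.
      rewrite inE ptsE; apply/andP; split; last by rewrite /A in_setU yin.
      by move: yin; rewrite !inE => /andP [].
    have through U : incident U m -> U != P -> exists LU YU,
        [/\ incident x LU, incident U LU, incident YU LU, incident YU l & YU != P].
      move=> Um UP.
      have xU : x != U by apply/eqP => e; move: xm; rewrite e Um.
      have [LU /andP [xLU ULU]] := line_ex xU.
      have LUl : LU != l by apply/eqP => e; move: (offl U Um UP); rewrite -e ULU.
      have [YU /andP [YLU Yl]] := meet_ex LUl.
      exists LU, YU; split => //; apply/eqP => e; subst YU.
      have PU : P != U by rewrite eq_sym.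
      by move: xm; rewrite -(line_uniq PU YLU ULU Pm Um) xLU.
    have two U V LU YU LV YV : incident U m -> U != P -> incident V m -> V != P -> U != V ->
        U \in A -> V \in A ->
        [/\ incident x LU, incident U LU, incident YU LU, incident YU l & YU != P] ->
        [/\ incident x LV, incident V LV, incident YV LV, incident YV l & YV != P] ->
        YU != Q -> YV != Q -> (2 <= secant_mult A x)%N.
      move=> Um UP Vm VP UV UA VA [xLU ULU YLU YUl YUP] [xLV VLV YLV YVl YVP] YUQ YVQ.
      have LUV : LU != LV.
        by apply/eqP => e; subst LV; move: xm; rewrite -(line_uniq UV ULU VLV Um Vm) xLU.
      apply: (sec_ge2 LUV xLU xLV).
      + apply: (card2_of (a := U) (b := YU)).
        * by apply/eqP => e; move: (offl U Um UP); rewrite e YUl.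
        * by rewrite inE ptsE ULU UA.
        * by rewrite inE ptsE YLU memA YUP YUQ YUl.
      + apply: (card2_of (a := V) (b := YV)).
        * by apply/eqP => e; move: (offl V Vm VP); rewrite e YVl.
        * by rewrite inE ptsE VLV VA.
        * by rewrite inE ptsE YLV memA YVP YVQ YVl.
    have dist U V LU YU LV YV : incident U m -> incident V m -> U != V ->
        [/\ incident x LU, incident U LU, incident YU LU, incident YU l & YU != P] ->
        [/\ incident x LV, incident V LV, incident YV LV, incident YV l & YV != P] ->
        YU != YV.
      move=> Um Vm UV [xLU ULU YLU YUl YUP] [xLV VLV YLV YVl YVP].
      apply/eqP => e; subst YV.
      have xY : x != YU by apply/eqP => e; move: xl; rewrite e YUl.
      have e2 := line_uniq xY xLU YLU xLV YLV; subst LV.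
      by move: xm; rewrite -(line_uniq UV ULU VLV Um Vm) xLU.
    have RA : R \in A by rewrite memA eqxx !orbT.
    have SA : S \in A by rewrite memA eqxx !orbT.
    have TA : T \in A by rewrite memA eqxx !orbT.
    have [LR [YR hR]] := through R Rm RP.
    have [LS [YS hS]] := through S Sm SP.
    have [LT [YT hT]] := through T Tm TP.
    have dRS := dist _ _ _ _ _ _ Rm Sm RS hR hS.
    have dRT := dist _ _ _ _ _ _ Rm Tm RT hR hT.
    have dST := dist _ _ _ _ _ _ Sm Tm ST hS hT.
    have [eR|nR] := eqVneq YR Q.
      subst YR; apply: (two _ _ _ _ _ _ Sm SP Tm TP ST SA TA hS hT).
      * by rewrite eq_sym.
      * by rewrite eq_sym.
    have [eS|nS] := eqVneq YS Q.
      subst YS; apply: (two _ _ _ _ _ _ Rm RP Tm TP RT RA TA hR hT) => //.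
      by rewrite eq_sym.
    exact: (two _ _ _ _ _ _ Rm RP Sm SP RS RA SA hR hS).
split => //; move=> [B [sBA cB satB]].
case: satB => _ _ satx.
have [a aA aB] : exists2 a, a \in A & a \notin B.
  have : ~~ (A \subset B).
    by apply/negP => /subset_leq_card; rewrite cA cB addn2 /= ltnn.
  by case/subsetPn => a aA aB; exists a.
have sB : B \subset pts l :|: pts m := subset_trans sBA sA.
have QB : Q \notin B by apply: contra QA; apply: (subsetP sBA).
have Bm b : b \in B -> incident b m -> [\/ b = R, b = S | b = T] /\ b != a.
  move=> bB bm; split; first exact: Am (subsetP sBA b bB) bm.
  by apply/eqP => e; move: aB; rewrite -e bB.
have q3 : (3 <= #|F|)%N by apply: leq_trans q4.
suff [x xB hx] : exists2 x, x \notin B & (secant_mult B x <= 1)%N.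
  by have := leq_trans (satx x xB) hx.
move: aA; rewrite memA => /orP [/and3P [aP aQ al]|].
  apply: (kill_l (R:=R) (S:=S) (T:=T) (Y:=a) lm Pl Pm Ql QP Rm Sm Tm RP SP TP RS al aP aQ sB QB aB).
  by move=> b bB bm; case: (Bm b bB bm).
case/or3P => /eqP ea; subst a.
- apply: (kill_m (U:=S) (V:=T) q3 lm Pl Pm Ql QP Sm Tm SP TP ST sB QB).
  move=> b bB bm; case: (Bm b bB bm) => -[] -> h.
  + by rewrite eqxx in h.
  + by left.
  + by right.
- apply: (kill_m (U:=R) (V:=T) q3 lm Pl Pm Ql QP Rm Tm RP TP RT sB QB).
  move=> b bB bm; case: (Bm b bB bm) => -[] -> h.
  + by left.
  + by rewrite eqxx in h.
  + by right.
- apply: (kill_m (U:=R) (V:=S) q3 lm Pl Pm Ql QP Rm Sm RP SP RS sB QB).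
  move=> b bB bm; case: (Bm b bB bm) => -[] -> h.
  + by left.
  + by right.
  + by rewrite eqxx in h.
Qed.
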